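(* For all $a,b\in[0,\infty]$ with $a\leq b$, there exist sequences $(\ell_p)_{p=1}^\infty$ and $(\gamma_p)_{p=1}^\infty$ of positive reals such that: (a) $\lim_{p\to\infty}\gamma_{2p+1}=a$ and $\lim_{p\to\infty}\gamma_{2p}=b$; (b) $\lim_{p\to\infty}(\ell_{p+1}-\ell_p)=\infty$; (c) $\lim_{p\to\infty}\ell_p/e^{\gamma_p\ell_p}=0$; (d) $\limsup_{p\to\infty}\gamma_{p+1}\ell_{p+1}/\ell_p\leq b$; (e) $\gamma_p\ell_p+1\leq\gamma_{p+1}\ell_{p+1}$ for all $p\in\mathbb N$; (f) for every constant $c\geq0$, $\lim_{p\to\infty}\big(cp+\sum_{j=1}^p\ell_j\big)/e^{\gamma_p\ell_p}=0$. *)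

(* Defs.v *)
From Stdlib Require Import Reals.
From Coquelicot Require Import Coquelicot.

(* Main.v *)
Require Import Defs.
From Stdlib Require Import Reals.
From Coquelicot Require Import Coquelicot.
From Stdlib Require Import Lra Lia Psatz.
Open Scope R_scope.

Definition Sq (a : Rbar) (k : nat) : R :=
  match a with Finite r => r + / (INR k + 1) | _ => INR k + 1 end.

Definition gseq (a b : Rbar) (p : nat) : R :=
  if Nat.odd p then Sq a (Nat.div2 p) else Sq b (Nat.div2 p).

Fixpoint lseq (g : nat -> R) (p : nat) : R :=
  match p with
  | O => 1 + / g O
  | S q => Rmax (lseq g q + 2 * INR q + 3) ((g q * lseq g q + 1) / g (S q))
  end.

Lemma INRp1_pos (k : nat) : 0 < INR k + 1.
Proof. pose proof (pos_INR k). lra. Qed.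

Lemma lim_inv1 : is_lim_seq (fun k => / (INR k + 1)) 0.
Proof.
  assert (H : is_lim_seq (fun k => INR k + 1) p_infty).
  { apply is_lim_seq_le_p_loc with INR.
    - exists O. intros; lra.
    - exact is_lim_seq_INR. }
  pose proof (is_lim_seq_inv _ _ H) as H2.
  apply H2. discriminate.
Qed.

Lemma lim_K (K : R) : is_lim_seq (fun p => K / (INR p + 1)) 0.
Proof.
  pose proof (is_lim_seq_scal_l _ K _ lim_inv1) as H.
  simpl in H. rewrite Rmult_0_r in H. unfold Rdiv. exact H.
Qed.

Lemma Sq_low (a : Rbar) (ha : Rbar_le (Finite 0) a) (k : nat) : / (INR k + 1) <= Sq a k.
Proof.
  pose proof (INRp1_pos k) as Hk. pose proof (pos_INR k).
  assert (/ (INR k + 1) <= 1).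
  { rewrite <- Rinv_1. apply Rinv_le_contravar; lra. }
  destruct a as [r| |]; simpl in *; lra.
Qed.

Lemma Sq_lim (a : Rbar) (ha : Rbar_le (Finite 0) a) : is_lim_seq (Sq a) a.
Proof.
  destruct a as [r| |]; simpl in *.
  - pose proof (is_lim_seq_plus' _ _ r 0 (is_lim_seq_const r) lim_inv1) as H.
    rewrite Rplus_0_r in H. exact H.
  - apply is_lim_seq_le_p_loc with INR.
    + exists O. intros; unfold Sq; lra.
    + exact is_lim_seq_INR.
  - contradiction.
Qed.

Lemma g_low (a b : Rbar) (ha : Rbar_le (Finite 0) a) (hb : Rbar_le (Finite 0) b) (p : nat) :
  / (INR p + 1) <= gseq a b p.
Proof.
  assert (Hle : / (INR p + 1) <= / (INR (Nat.div2 p) + 1)).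
  { apply Rinv_le_contravar. apply INRp1_pos.
    apply Rplus_le_compat_r. apply le_INR.
    pose proof (Nat.div2_odd p). destruct (Nat.odd p); simpl in *; lia. }
  unfold gseq. destruct (Nat.odd p).
  - eapply Rle_trans. exact Hle. apply Sq_low; auto.
  - eapply Rle_trans. exact Hle. apply Sq_low; auto.
Qed.

Lemma inv_half (x y : R) : 0 < x -> 0 < y -> y <= 2 * x -> / x <= 2 * / y.
Proof.
  intros Hx Hy H.
  assert (E : / x = 2 * / (2 * x)) by (field; lra).
  rewrite E. apply Rmult_le_compat_l. lra.
  apply Rinv_le_contravar; lra.
Qed.

Lemma g_up (r s : R) (hr : 0 <= r) (hrs : r <= s) (p : nat) :
  gseq (Finite r) (Finite s) p <= s + 2 * / (INR p + 1).
Proof.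
  assert (Hle : / (INR (Nat.div2 p) + 1) <= 2 * / (INR p + 1)).
  { apply inv_half; try apply INRp1_pos.
    pose proof (Nat.div2_odd p) as E.
    assert (Hn : (p <= 2 * Nat.div2 p + 1)%nat) by (destruct (Nat.odd p); simpl in *; lia).
    apply le_INR in Hn. rewrite plus_INR, mult_INR in Hn. simpl in Hn. lra. }
  unfold gseq, Sq. destruct (Nat.odd p); lra.
Qed.

Section L.
Variable g : nat -> R.
Hypothesis gpos : forall p, 0 < g p.

Lemma l_sq (p : nat) : (INR p + 1) ^ 2 <= lseq g p.
Proof.
  induction p as [|q IH].
  - simpl. pose proof (Rinv_0_lt_compat _ (gpos O)). lra.
  - simpl lseq. eapply Rle_trans; [|apply Rmax_l].
    rewrite S_INR. nra.
Qed.

Lemma l_pos (p : nat) : 0 < lseq g p.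
Proof. pose proof (l_sq p). pose proof (INRp1_pos p). nra. Qed.

Lemma l_inc (p : nat) : lseq g p + 2 * INR p + 3 <= lseq g (S p).
Proof. simpl lseq. apply Rmax_l. Qed.

Lemma x_inc (p : nat) : g p * lseq g p + 1 <= g (S p) * lseq g (S p).
Proof.
  simpl lseq at 2.
  pose proof (gpos (S p)).
  eapply Rle_trans; [|apply Rmult_le_compat_l; [lra|apply Rmax_r]].
  right. field. lra.
Qed.

Lemma x_low (p : nat) : INR p + 1 <= g p * lseq g p.
Proof.
  induction p as [|q IH].
  - simpl. pose proof (gpos O). rewrite Rmult_plus_distr_l, Rinv_r; lra.
  - rewrite S_INR. pose proof (x_inc q). lra.
Qed.

Lemma l_sum (p : nat) : 0 <= sum_n_m (lseq g) 1 p <= INR p * lseq g p.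
Proof.
  induction p as [|q IH].
  - rewrite sum_n_m_zero by lia. simpl. unfold zero; simpl. lra.
  - rewrite sum_n_Sm by lia.
    change (plus (sum_n_m (lseq g) 1 q) (lseq g (S q))) with (sum_n_m (lseq g) 1 q + lseq g (S q)).
    pose proof (l_inc q). pose proof (l_pos q). pose proof (pos_INR q).
    rewrite S_INR. split; nra.
Qed.
End L.

Lemma exp_low (y : R) : 0 < y -> y ^ 4 / 256 <= exp y.
Proof.
  intros Hy.
  assert (E : exp y = exp (y/4) ^ 4).
  { simpl. rewrite Rmult_1_r, <- !exp_plus. f_equal. field. }
  assert (H1 : y / 4 <= exp (y/4)).
  { pose proof (exp_ineq1 (y/4)). assert (y/4 <> 0) by lra. specialize (H H0). lra. }
  rewrite E.
  assert (E2 : y ^ 4 / 256 = (y/4) ^ 4) by field.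
  rewrite E2. apply pow_incr. lra.
Qed.

Lemma key (y z K : R) : 1 <= y -> 0 <= K -> 0 <= z <= K * y ^ 3 -> z / exp y <= 256 * K / y.
Proof.
  intros Hy HK Hz.
  pose proof (exp_low y ltac:(lra)) as He.
  assert (Hp : 0 < y ^ 4 / 256) by (apply Rdiv_lt_0_compat; [apply pow_lt; lra| lra]).
  unfold Rdiv at 1.
  eapply Rle_trans.
  { apply Rmult_le_compat. lra. left; apply Rinv_0_lt_compat; lra. apply Hz.
    apply Rinv_le_contravar; [exact Hp| exact He]. }
  right. field. lra.
Qed.

Lemma squeeze (v : nat -> R) (K : R) :
  (forall p, 0 <= v p <= K / (INR p + 1)) -> is_lim_seq v 0.
Proof.
  intros H. apply is_lim_seq_le_le with (fun _ => 0) (fun p => K / (INR p + 1)).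
  exact H. apply is_lim_seq_const. apply lim_K.
Qed.

Lemma div_mono (K x y : R) : 0 <= K -> 0 < x -> x <= y -> K / y <= K / x.
Proof.
  intros. unfold Rdiv. apply Rmult_le_compat_l. lra. apply Rinv_le_contravar; lra.
Qed.

Theorem lemma2p4 (a b : Rbar) (ha : Rbar_le (Finite 0) a) (hab : Rbar_le a b) :
  exists (l g : nat -> R),
    (forall p : nat, (1 <= p)%nat -> 0 < l p /\ 0 < g p) /\
    (* (a) *)
    is_lim_seq (fun p : nat => g (2 * p + 1)%nat) a /\
    is_lim_seq (fun p : nat => g (2 * p)%nat) b /\
    (* (b) *)
    is_lim_seq (fun p : nat => l (p + 1)%nat - l p) p_infty /\
    (* (c) *)
    is_lim_seq (fun p : nat => l p / exp (g p * l p)) 0 /\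
    (* (d) *)
    Rbar_le (LimSup_seq (fun p : nat => g (p + 1)%nat * l (p + 1)%nat / l p)) b /\
    (* (e) *)
    (forall p : nat, (1 <= p)%nat -> g p * l p + 1 <= g (p + 1)%nat * l (p + 1)%nat) /\
    (* (f) *)
    (forall c : R, 0 <= c ->
       is_lim_seq (fun p : nat => (c * INR p + sum_n_m l 1 p) / exp (g p * l p)) 0).
Proof.
  assert (hb : Rbar_le (Finite 0) b) by (eapply Rbar_le_trans; eauto).
  set (g := gseq a b).
  assert (gl : forall p, / (INR p + 1) <= g p) by (intro; apply g_low; auto).
  assert (gpos : forall p, 0 < g p).
  { intro p. eapply Rlt_le_trans; [|apply gl]. apply Rinv_0_lt_compat, INRp1_pos. }
  set (l := lseq g).
  assert (lx : forall p, l p <= (g p * l p) ^ 2).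
  { intro p. pose proof (gl p). pose proof (x_low g gpos p). pose proof (INRp1_pos p).
    pose proof (l_pos g gpos p). fold l in H0, H2.
    assert (1 <= (INR p + 1) * g p).
    { apply Rmult_le_reg_l with (/ (INR p + 1)). apply Rinv_0_lt_compat; lra.
      rewrite <- Rmult_assoc, Rinv_l, Rmult_1_l, Rmult_1_r by lra. exact H. }
    nra. }
  exists l, g. split; [|split; [|split; [|split; [|split; [|split; [|split]]]]]].
  - intros p _. split. apply l_pos; auto. auto.
  - eapply is_lim_seq_ext; [|apply (Sq_lim a ha)].
    intro p. unfold g, gseq. rewrite Nat.odd_odd, Nat.add_1_r, Nat.div2_succ_double. reflexivity.
  - eapply is_lim_seq_ext; [|apply (Sq_lim b hb)].
    intro p. unfold g, gseq. rewrite Nat.odd_even, Nat.div2_double. reflexivity.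
  - apply is_lim_seq_le_p_loc with INR; [|exact is_lim_seq_INR].
    exists O. intros p _. rewrite Nat.add_1_r. pose proof (l_inc g p). fold l in H.
    pose proof (pos_INR p). lra.
  - apply squeeze with 256. intro p.
    pose proof (x_low g gpos p) as X. fold l in X. pose proof (l_pos g gpos p). fold l in H.
    pose proof (INRp1_pos p). split.
    + unfold Rdiv. apply Rmult_le_pos. lra. left; apply Rinv_0_lt_compat, exp_pos.
    + pose proof (lx p). pose proof (pos_INR p). clearbody l g.
      assert (Hz : 0 <= l p <= 1 * (g p * l p) ^ 3).
      { split. lra. set (y := g p * l p) in *. clearbody y.
        assert (y ^ 2 <= y ^ 3). { simpl. pose proof (INRp1_pos p). pose proof (pos_INR p). nra. }
        lra. }
      eapply Rle_trans. apply (key (g p * l p) (l p) 1 ltac:(lra) ltac:(lra) Hz).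
      replace (256 * 1) with 256 by ring. apply div_mono; lra.
  - destruct b as [s| |].
    + destruct a as [r| |]; simpl in ha, hab; try contradiction.
      set (t := fun p : nat => / (INR p + 1)).
      set (W := fun p => (s + 2 * t p) * (1 + 3 * t p) + t p).
      assert (HW : is_lim_seq W s).
      { assert (Ht : is_lim_seq t 0) by apply lim_inv1.
        assert (H2 : is_lim_seq (fun p => 2 * t p) (2 * 0)).
        { apply (is_lim_seq_scal_l t 2 0 Ht). }
        assert (H3 : is_lim_seq (fun p => 3 * t p) (3 * 0)).
        { apply (is_lim_seq_scal_l t 3 0 Ht). }
        pose proof (is_lim_seq_plus' _ _ _ _ (is_lim_seq_const s) H2) as H4.
        pose proof (is_lim_seq_plus' _ _ _ _ (is_lim_seq_const 1) H3) as H5.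
        pose proof (is_lim_seq_mult' _ _ _ _ H4 H5) as H6.
        pose proof (is_lim_seq_plus' _ _ _ _ H6 Ht) as H7.
        replace ((s + 2 * 0) * (1 + 3 * 0) + 0) with s in H7 by ring. exact H7. }
      rewrite <- (is_LimSup_seq_unique _ _ (is_lim_LimSup_seq _ _ HW)).
      apply LimSup_le. exists O. intros p _. rewrite Nat.add_1_r.
      pose proof (l_sq g gpos p) as Hl. fold l in Hl.
      pose proof (INRp1_pos p) as Hp.
      assert (Htp : 0 < t p) by (apply Rinv_0_lt_compat; lra).
      assert (Ht1 : (INR p + 1) * t p = 1) by (unfold t; field; lra).
      assert (Hg1 : g (S p) <= s + 2 * t p).
      { eapply Rle_trans. apply g_up; auto. apply Rplus_le_compat_l, Rmult_le_compat_l. lra.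
        apply Rinv_le_contravar. lra. rewrite S_INR. lra. }
      assert (Hg0 : g p <= s + 2 * t p) by (apply g_up; auto).
      assert (Hlp : 0 < l p) by (apply l_pos; auto).
      pose proof (gpos p). pose proof (gpos (S p)).
      unfold l at 1. simpl lseq. fold l.
      unfold W. clearbody W t l g.
      assert (HX : g (S p) * Rmax (l p + 2 * INR p + 3) ((g p * l p + 1) / g (S p))
                   <= (s + 2 * t p) * (1 + 3 * t p) * l p + 1).
      { apply Rmax_case.
        - assert (2 * INR p + 3 <= 3 * t p * l p).
          { assert (3 * t p * l p >= 3 * t p * (INR p + 1) ^ 2) by nra.
            assert (3 * t p * (INR p + 1) ^ 2 = 3 * (INR p + 1)) by (simpl; nra).
            pose proof (pos_INR p). lra. }
          assert (0 <= s + 2 * t p) by lra.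
          assert (g (S p) * (l p + 2 * INR p + 3) <= (s + 2 * t p) * (l p + 3 * t p * l p)).
          { apply Rmult_le_compat; nra. }
          nra.
        - replace (g (S p) * ((g p * l p + 1) / g (S p))) with (g p * l p + 1) by (field; lra).
          assert (g p * l p <= (s + 2 * t p) * l p) by nra.
          assert (0 <= (s + 2 * t p) * (3 * t p) * l p).
          { apply Rmult_le_pos; [apply Rmult_le_pos|]; lra. }
          nra. }
      apply Rmult_le_reg_r with (l p). exact Hlp.
      unfold Rdiv. rewrite Rmult_assoc, Rinv_l, Rmult_1_r by lra.
      assert (t p * l p >= 1).
      { assert (t p * l p >= t p * (INR p + 1) ^ 2) by nra.
        assert (t p * (INR p + 1) ^ 2 = INR p + 1) by (simpl; nra).
        pose proof (pos_INR p). lra. }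
      nra.
    + destruct (LimSup_seq _); simpl; trivial.
    + simpl in hb. contradiction.
  - intros p _. rewrite Nat.add_1_r. apply x_inc. auto.
  - intros c hc. apply squeeze with (256 * (c + 1)). intro p.
    pose proof (x_low g gpos p) as X. fold l in X. pose proof (l_pos g gpos p). fold l in H.
    pose proof (INRp1_pos p). pose proof (l_sum g gpos p) as HS. fold l in HS.
    pose proof (pos_INR p). pose proof (lx p).
    set (x := g p * l p) in *. clearbody x l g.
    split.
    + unfold Rdiv. apply Rmult_le_pos. nra. left; apply Rinv_0_lt_compat, exp_pos.
    + assert (Hz : 0 <= c * INR p + sum_n_m l 1 p <= (c + 1) * x ^ 3).
      { split. nra.
        assert (c * INR p <= c * x ^ 3).
        { apply Rmult_le_compat_l. lra. assert (x <= x ^ 3) by nra. lra. }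
        assert (INR p * l p <= x * x ^ 2) by nra.
        nra. }
      eapply Rle_trans. apply (key x (c * INR p + sum_n_m l 1 p) (c + 1) ltac:(lra) ltac:(lra) Hz).
      apply div_mono; nra.
Qed.
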